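(* Let $\theta$ be a universal formula in the first-order language with equality over a single binary relation symbol $R$, using only the variables $x,y,z$. If $(P,Z)\models\theta[w]$ for every assignment $w:\{x,y,z\}\to P$, then $(Q,T)\models\theta[v]$ for every assignment $v:\{x,y,z\}\to Q$.
   Context: $(P,Z)$ is the ''pentagon'': $P=\{0,1,2,3,4\}$, $Z=\{(i,j): i<5,\ j\equiv i\pm1 \pmod 5\}$. $(Q,T)$ is the ''square'': $Q=\{0,1,2,3\}$, $T=\{(i,j): i<4,\ j\equiv i\pm1 \pmod 4\}$; $R$ is interpreted by $Z$, resp. $T$. A universal formula is one built from atomic formulas ($Ruv$ or $u=v$, $u,v$ variables) and negations of atomic formulas using only conjunction, disjunction and universal quantification. ''Using only the variables $x,y,z$'' means every variable occurring, free or bound, is among $x,y,z$ (variables may be requantified). *)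

(* Defs.v *)
From mathcomp Require Import all_boot.
Set Implicit Arguments. Unset Strict Implicit. Unset Printing Implicit Defensive.

Inductive var := vx | vy | vz.

Definition var_eqb (a b : var) : bool :=
  match a, b with vx, vx | vy, vy | vz, vz => true | _, _ => false end.

(* Universal formulas over a single binary relation symbol R, in the
   variables x, y, z: atoms and negated atoms, closed under
   conjunction, disjunction and universal quantification. *)
Inductive uform :=
  | URel  (u v : var)
  | UEq   (u v : var)
  | UNRel (u v : var)
  | UNEq  (u v : var)
  | UAnd  (f g : uform)
  | UOr   (f g : uform)
  | UAll  (u : var) (f : uform).

Definition upd (D : Type) (w : var -> D) (u : var) (d : D) : var -> D :=
  fun t => if var_eqb t u then d else w t.

Fixpoint sat (D : Type) (rel : D -> D -> Prop) (f : uform) (w : var -> D) : Prop :=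
  match f with
  | URel u v => rel (w u) (w v)
  | UEq u v => w u = w v
  | UNRel u v => ~ rel (w u) (w v)
  | UNEq u v => w u <> w v
  | UAnd f g => sat rel f w /\ sat rel g w
  | UOr f g => sat rel f w \/ sat rel g w
  | UAll u f => forall d : D, sat rel f (upd w u d)
  end.

Definition cyc_rel (n : nat) (i j : 'I_n) : Prop :=
  (j %% n = (i + 1) %% n) \/ ((j + 1) %% n = i %% n).

Definition pentZ : 'I_5 -> 'I_5 -> Prop := @cyc_rel 5.
Definition squareT : 'I_4 -> 'I_4 -> Prop := @cyc_rel 4.

(* Main.v *)
Require Import Defs.
From mathcomp Require Import all_boot.

Definition rb (n : nat) (i j : 'I_n) : bool :=
  (j %% n == (i + 1) %% n) || ((j + 1) %% n == i %% n).

Arguments rb {n}.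

Lemma cycP n (i j : 'I_n) : cyc_rel i j <-> rb i j.
Proof.
rewrite /cyc_rel /rb; split.
- by case=> ->; rewrite eqxx ?orbT.
- by case/orP=> /eqP ->; [left|right].
Qed.

Definition vars := [:: vx; vy; vz].

Definition Sf (v : var -> 'I_4) (w : var -> 'I_5) : bool :=
  all (fun t1 => all (fun t2 =>
     ((v t1 == v t2) == (w t1 == w t2)) && (rb (v t1) (v t2) == rb (w t1) (w t2)))
     vars) vars.

Fixpoint InL (T : Type) (x : T) (s : seq T) : Prop :=
  match s with [::] => False | a :: s => a = x \/ InL T x s end.

Lemma all_In (T : Type) (p : T -> bool) s x : all p s -> InL T x s -> p x.
Proof.
elim: s => //= a s IH /andP [Ha Hs] [<-|Hx] //; exact: IH.
Qed.

Lemma in_vars t : InL var t vars.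
Proof. by case: t; rewrite /=; tauto. Qed.

Lemma Sf_at v w : Sf v w -> forall t1 t2,
  (v t1 == v t2) = (w t1 == w t2) /\ rb (v t1) (v t2) = rb (w t1) (w t2).
Proof.
move=> H t1 t2.
have := all_In _ _ _ _ (all_In _ _ _ _ H (in_vars t1)) (in_vars t2).
by case/andP=> /eqP -> /eqP ->.
Qed.

Definition mk {T : Type} (a1 a2 a3 : T) : var -> T :=
  fun t => match t with vx => a1 | vy => a2 | vz => a3 end.

Definition l4 : seq 'I_4 := [:: @Ordinal 4 0 isT; @Ordinal 4 1 isT; @Ordinal 4 2 isT; @Ordinal 4 3 isT].
Definition l5 : seq 'I_5 := [:: @Ordinal 5 0 isT; @Ordinal 5 1 isT; @Ordinal 5 2 isT; @Ordinal 5 3 isT; @Ordinal 5 4 isT].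
Lemma mem4 (i : 'I_4) : i \in l4.
Proof. by rewrite -(mem_map val_inj) /=; case: i => [[|[|[|[|m]]]]]. Qed.
Lemma mem5 (i : 'I_5) : i \in l5.
Proof. by rewrite -(mem_map val_inj) /=; case: i => [[|[|[|[|[|m]]]]]]. Qed.

Definition check_u (u : var) : bool :=
  all (fun a1 : 'I_4 => all (fun a2 : 'I_4 => all (fun a3 : 'I_4 =>
  all (fun b1 : 'I_5 => all (fun b2 : 'I_5 => all (fun b3 : 'I_5 =>
    Sf (mk a1 a2 a3) (mk b1 b2 b3) ==>
    all (fun e : 'I_4 => has (fun d : 'I_5 =>
        Sf (upd (mk a1 a2 a3) u e) (upd (mk b1 b2 b3) u d)) l5) l4)
  l5) l5) l5) l4) l4) l4.

Lemma check_ok : check_u vx && check_u vy && check_u vz = true.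
Proof. vm_compute. reflexivity. Qed.

Lemma ext_u u v w e : Sf v w -> exists d, Sf (upd v u e) (upd w u d).
Proof.
move=> H.
have Hc : check_u u.
  by case: u; move: check_ok => /andP [/andP [? ?] ?].
have Hs : Sf (mk (v vx) (v vy) (v vz)) (mk (w vx) (w vy) (w vz)) by exact: H.
move/allP: Hc => /(_ (v vx) (mem4 _)) /allP /(_ (v vy) (mem4 _))
  /allP /(_ (v vz) (mem4 _)) /allP /(_ (w vx) (mem5 _))
  /allP /(_ (w vy) (mem5 _)) /allP /(_ (w vz) (mem5 _)).
move/implyP/(_ Hs)/allP/(_ e (mem4 _))/hasP => [d _ Hd].
exists d.
by case: u Hd.
Qed.

Lemma key f : forall v w, Sf v w -> sat pentZ f w -> sat squareT f v.
Proof.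
elim: f => [a b|a b|a b|a b|f IHf g IHg|f IHf g IHg|u f IHf] v w H /=.
- have [_ E] := Sf_at _ _ H a b; rewrite /pentZ /squareT => /cycP Hp; apply/cycP; by rewrite E.
- by have [E _] := Sf_at _ _ H a b => /eqP; rewrite -E => /eqP.
- have [_ E] := Sf_at _ _ H a b; rewrite /pentZ /squareT => Hn /cycP Hp; apply: Hn; apply/cycP; by rewrite -E.
- by have [E _] := Sf_at _ _ H a b => Hn Heq; apply: Hn; apply/eqP; rewrite -E; apply/eqP.
- by case=> ? ?; split; [exact: (IHf v w)|exact: (IHg v w)].
- by case=> ?; [left; exact: (IHf v w)|right; exact: (IHg v w)].
- move=> Hall e. have [d Hd] := ext_u u _ _ e H. exact: (IHf _ _ Hd (Hall d)).
Qed.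

Lemma Sf_start (v : var -> 'I_4) : exists w, Sf v w.
Proof.
have H0 : Sf (fun _ => ord0) (fun _ => ord0) by [].
have [d1 H1] := ext_u vx _ _ (v vx) H0.
have [d2 H2] := ext_u vy _ _ (v vy) H1.
have [d3 H3] := ext_u vz _ _ (v vz) H2.
eexists. exact: H3.
Qed.

Theorem lemma2 (theta : uform) :
  (forall w : var -> 'I_5, sat pentZ theta w) ->
  forall v : var -> 'I_4, sat squareT theta v.
Proof.
move=> Hw v.
have [w Hs] := Sf_start v.
exact: (key _ _ _ Hs (Hw w)).
Qed.
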